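(* Let $\mathcal D=(\mathbb N,<)$ with the natural order. Let $\mathit{cardRE}:\mathbb N\to\mathbb N$ be the partial function with $\mathit{cardRE}(n)=\mathrm{card}(W_n)$ if $W_n$ is finite and undefined otherwise, where $W_n$ is the computably enumerable set with code $n$ (in a standard acceptable numbering). Then $\mathit{cardRE}\in\mathrm{Max}_{\mathrm{Rec}}[\mathbb N\to\mathcal D]\setminus\mathrm{Min}_{\mathrm{PR}}[\mathbb N\to\mathcal D]$.
   Context: For a partial $f:\mathbb N\times\mathbb N\to\mathbb N$ monotone increasing (resp. decreasing) in its second argument on its domain, $\max f$ (resp. $\min f$) is the partial function defined exactly at those $x$ for which $\{f(x,t):t,\ f(x,t)\text{ defined}\}$ is finite and non-empty, with value its maximum (resp. minimum). $\mathrm{Max}_{\mathrm{Rec}}[\mathbb N\to\mathcal D]$ is the class of all $\max f$ with $f$ total computable and monotone increasing in its second argument; $\mathrm{Min}_{\mathrm{PR}}[\mathbb N\to\mathcal D]$ is the class of all $\min f$ with $f$ partial computable and monotone decreasing in its second argument. *)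

(* Defs.v *)
From Stdlib Require Import Arith List.
Import ListNotations.

Inductive term : Type :=
| Zero : term
| Succ : term
| Proj : nat -> term
| Comp : term -> list term -> term
| Prec : term -> term -> term
| Mu   : term -> term.

(** Big-step evaluation: [eval t v y] means the program [t] on arguments [v]
    halts with output [y].  It is deterministic, so every term denotes a
    partial function. *)
Inductive eval : term -> list nat -> nat -> Prop :=
| eZero v : eval Zero v 0
| eSucc x v : eval Succ (x :: v) (S x)
| eProj i v : i < length v -> eval (Proj i) v (nth i v 0)
| eComp f gs v ys z :
    Forall2 (fun g y => eval g v y) gs ys -> eval f ys z -> eval (Comp f gs) v z
| ePrec0 f g v y : eval f v y -> eval (Prec f g) (0 :: v) y
| ePrecS f g n v r y :
    eval (Prec f g) (n :: v) r -> eval g (n :: r :: v) y ->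
    eval (Prec f g) (S n :: v) y
| eMu f v n :
    eval f (n :: v) 0 ->
    (forall m, m < n -> exists k, eval f (m :: v) (S k)) ->
    eval (Mu f) v n.

(** * Partial functions are represented by their graphs (relations). *)

Definition pcomp1 (f : nat -> nat -> Prop) : Prop :=
  exists t, forall x y, f x y <-> eval t [x] y.
Definition pcomp2 (f : nat -> nat -> nat -> Prop) : Prop :=
  exists t, forall x s y, f x s y <-> eval t [x; s] y.

Definition tcomp1 (f : nat -> nat) : Prop :=
  exists t, forall x, eval t [x] (f x).
Definition tcomp2 (f : nat -> nat -> nat) : Prop :=
  exists t, forall x s, eval t [x; s] (f x s).

Definition acceptable (phi : nat -> nat -> nat -> Prop) : Prop :=
  pcomp2 phi /\
  (forall f, pcomp1 f -> exists e, forall x y, phi e x y <-> f x y) /\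
  (forall psi, pcomp2 psi ->
     exists s : nat -> nat, tcomp1 s /\
       forall e x y, psi e x y <-> phi (s e) x y).

Definition W (phi : nat -> nat -> nat -> Prop) (n x : nat) : Prop :=
  exists y, phi n x y.

Definition cardRE (phi : nat -> nat -> nat -> Prop) (n c : nat) : Prop :=
  exists l : list nat, NoDup l /\ (forall x, In x l <-> W phi n x) /\ length l = c.

Definition values (f : nat -> nat -> nat -> Prop) (x z : nat) : Prop :=
  exists t, f x t z.

Definition pmax (f : nat -> nat -> nat -> Prop) (x y : nat) : Prop :=
  (exists l : list nat, forall z, values f x z <-> In z l) /\
  values f x y /\ (forall z, values f x z -> z <= y).

Definition pmin (f : nat -> nat -> nat -> Prop) (x y : nat) : Prop :=
  (exists l : list nat, forall z, values f x z <-> In z l) /\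
  values f x y /\ (forall z, values f x z -> y <= z).

Definition mono_incr (f : nat -> nat -> nat -> Prop) : Prop :=
  forall x t t' y y', t <= t' -> f x t y -> f x t' y' -> y <= y'.
Definition mono_decr (f : nat -> nat -> nat -> Prop) : Prop :=
  forall x t t' y y', t <= t' -> f x t y -> f x t' y' -> y' <= y.

Definition graph2 (f : nat -> nat -> nat) : nat -> nat -> nat -> Prop :=
  fun x t y => f x t = y.

Definition MaxRec (g : nat -> nat -> Prop) : Prop :=
  exists f : nat -> nat -> nat,
    tcomp2 f /\ mono_incr (graph2 f) /\
    forall x y, g x y <-> pmax (graph2 f) x y.

Definition MinPR (g : nat -> nat -> Prop) : Prop :=
  exists f : nat -> nat -> nat -> Prop,
    pcomp2 f /\ mono_decr f /\
    forall x y, g x y <-> pmin f x y.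

(* Main.v *)
From Stdlib Require Import Arith Lia List Classical.
Import ListNotations.
Require Import Defs.

Section EI.
Variable P : term -> list nat -> nat -> Prop.
Hypothesis hZ : forall v, P Zero v 0.
Hypothesis hS : forall x v, P Succ (x::v) (S x).
Hypothesis hP : forall i v, i < length v -> P (Proj i) v (nth i v 0).
Hypothesis hC : forall f gs v ys z, Forall2 (fun g y => eval g v y /\ P g v y) gs ys -> eval f ys z -> P f ys z -> P (Comp f gs) v z.
Hypothesis hR0 : forall f g v y, eval f v y -> P f v y -> P (Prec f g) (0::v) y.
Hypothesis hRS : forall f g n v r y, eval (Prec f g) (n::v) r -> P (Prec f g) (n::v) r -> eval g (n::r::v) y -> P g (n::r::v) y -> P (Prec f g) (S n :: v) y.
Hypothesis hM : forall f v n, eval f (n::v) 0 -> P f (n::v) 0 -> (forall m, m < n -> exists k, eval f (m::v) (S k) /\ P f (m::v) (S k)) -> P (Mu f) v n.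
Fixpoint eval_ind2 t v y (H : eval t v y) {struct H} : P t v y :=
  match H in eval t v y return P t v y with
 | eZero v => hZ v
 | eSucc x v => hS x v
 | eProj i v h => hP i v h
 | eComp f gs v ys z HF Hf => hC f gs v ys z
    ((fix G gs ys (HF : Forall2 (fun g y => eval g v y) gs ys) : Forall2 (fun g y => eval g v y /\ P g v y) gs ys :=
       match HF in Forall2 _ gs ys return Forall2 (fun g y => eval g v y /\ P g v y) gs ys with
       | Forall2_nil _ => Forall2_nil _
       | @Forall2_cons _ _ _ g y gs' ys' h1 h2 => Forall2_cons g y (conj h1 (eval_ind2 g v y h1)) (G gs' ys' h2) end) gs ys HF)
    Hf (eval_ind2 f ys z Hf)
 | ePrec0 f g v y h => hR0 f g v y h (eval_ind2 _ _ _ h)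
 | ePrecS f g n v r y h1 h2 => hRS f g n v r y h1 (eval_ind2 _ _ _ h1) h2 (eval_ind2 _ _ _ h2)
 | eMu f v n h1 h2 => hM f v n h1 (eval_ind2 _ _ _ h1)
     (fun m hm => match h2 m hm with ex_intro _ k hk => ex_intro _ k (conj hk (eval_ind2 _ _ _ hk)) end)
 end.
End EI.

Definition term_ind2 (P : term -> Prop) (HZ : P Zero) (HS : P Succ) (HP : forall i, P (Proj i))
  (HC : forall f gs, P f -> Forall P gs -> P (Comp f gs)) (HR : forall f g, P f -> P g -> P (Prec f g))
  (HM : forall f, P f -> P (Mu f)) : forall t, P t :=
 fix F t := match t with
  | Zero => HZ | Succ => HS | Proj i => HP i
  | Comp f gs => HC f gs (F f) ((fix G l := match l return Forall P l with [] => Forall_nil _ | g :: l' => Forall_cons g (F g) (G l') end) gs)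
  | Prec f g => HR f g (F f) (F g)
  | Mu f => HM f (F f) end.

Definition condT := Prec (Proj 0) (Proj 3).
Definition predT := Prec Zero (Proj 0).
Definition addT := Prec (Proj 0) (Comp Succ [Proj 1]).
Definition cnd A B C := Comp condT [A;B;C].
Definition prd A := Comp predT [A].
Definition suc A := Comp Succ [A].
Definition one := suc Zero.
Definition projs a n := map Proj (seq a n).

Lemma eP i v y : i < length v -> nth i v 0 = y -> eval (Proj i) v y.
Proof. intros h <-; now constructor. Qed.

Lemma condT_ok a b c : eval condT [a;b;c] (match a with 0 => b | S _ => c end).
Proof.
  induction a.
  - constructor. apply eP; simpl; auto.
  - econstructor. exact IHa. apply eP; simpl; auto; lia.
Qed.
Lemma predT_ok a : eval predT [a] (pred a).
Proof.
  induction a.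
  - constructor. constructor.
  - econstructor. exact IHa. apply eP; simpl; auto; lia.
Qed.
Lemma addT_ok a b : eval addT [a;b] (a + b).
Proof.
  induction a.
  - constructor. apply eP; simpl; auto.
  - econstructor. exact IHa. econstructor. constructor. apply eP; simpl; auto; lia. constructor. constructor.
Qed.
Lemma cnd_ok A B C v a b c : eval A v a -> eval B v b -> eval C v c ->
  eval (cnd A B C) v (match a with 0 => b | S _ => c end).
Proof. intros. econstructor. repeat constructor; eauto. apply condT_ok. Qed.
Lemma prd_ok A v a : eval A v a -> eval (prd A) v (pred a).
Proof. intros. econstructor. repeat constructor; eauto. apply predT_ok. Qed.
Lemma suc_ok A v a : eval A v a -> eval (suc A) v (S a).
Proof. intros. econstructor. repeat constructor; eauto. constructor. Qed.
Lemma one_ok v : eval one v 1.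
Proof. apply suc_ok. constructor. Qed.
Lemma add_ok A B v a b : eval A v a -> eval B v b -> eval (Comp addT [A;B]) v (a+b).
Proof. intros. econstructor. repeat constructor; eauto. apply addT_ok. Qed.

Lemma projs_ok p w : Forall2 (fun g y => eval g (p ++ w) y) (projs (length p) (length w)) w.
Proof.
  revert p; induction w as [|x w IH]; intros p; simpl. constructor.
  constructor. apply eP. rewrite length_app; simpl; lia. rewrite app_nth2 by lia. now rewrite Nat.sub_diag.
  specialize (IH (p ++ [x])). rewrite <- app_assoc in IH. rewrite length_app in IH. simpl in IH.
  now rewrite Nat.add_1_r in IH.
Qed.

Fixpoint olist (l : list (option nat)) : option (list nat) :=
  match l with [] => Some [] | o :: l' => match o, olist l' with Some y, Some ys => Some (y::ys) | _, _ => None end end.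
Fixpoint prit (h0 : option nat) (hs : nat -> nat -> option nat) (n:nat) : option nat :=
  match n with 0 => h0 | S n' => match prit h0 hs n' with Some r => hs n' r | None => None end end.
Fixpoint mst (h : nat -> option nat) (j : nat) : nat :=
  match j with 0 => 0 | S j' => match mst h j' with
     | 0 => match h j' with None => 1 | Some 0 => j' + 2 | Some (S _) => 0 end
     | a => a end end.
Definition mres a := match a with S (S m) => Some m | _ => None end.
Fixpoint ev (s : nat) (t : term) (v : list nat) {struct t} : option nat :=
  match t with
  | Zero => Some 0
  | Succ => match v with x :: _ => Some (S x) | [] => None end
  | Proj i => if i <? length v then Some (nth i v 0) else None
  | Comp f gs => match olist (map (fun g => ev s g v) gs) with Some ys => ev s f ys | None => None end
  | Prec f g => match v with [] => None | n :: w => prit (ev s f w) (fun n r => ev s g (n :: r :: w)) n end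
  | Mu f => mres (mst (fun m => ev s f (m :: v)) s)
  end.
Definition enc (o : option nat) := match o with None => 0 | Some y => S y end.

Fixpoint allnz (cs : list term) : term :=
  match cs with [] => one | c :: cs' => cnd c Zero (allnz cs') end.

Fixpoint T (t : term) (k : nat) : term :=
  match t with
  | Zero => one
  | Succ => match k with 0 => Zero | S _ => suc (suc (Proj 1)) end
  | Proj i => if i <? k then suc (Proj (S i)) else Zero
  | Comp f gs => cnd (allnz (map (fun g => T g k) gs)) Zero
        (Comp (T f (length gs)) (Proj 0 :: map prd (map (fun g => T g k) gs)))
  | Prec f g => match k with 0 => Zero | S k' =>
       Comp (Prec (T f k') (cnd (Proj 1) Zero
               (Comp (T g (S (S k'))) ([Proj 2; Proj 0; prd (Proj 1)] ++ projs 3 k'))))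
            ([Proj 1; Proj 0] ++ projs 2 k') end
  | Mu f => let c := Comp (T f (S k)) ([Proj 2; Proj 0] ++ projs 3 k) in
       Comp (cnd (prd (Proj 0)) Zero (prd (Proj 0)))
        [Comp (Prec Zero (cnd (Proj 1) (cnd c one (cnd (prd c) (suc (suc (Proj 0))) Zero)) (Proj 1)))
              ([Proj 0; Proj 0] ++ projs 1 k)]
  end.

Lemma allnz_ok v cs ys : Forall2 (fun c y => eval c v y) cs ys ->
  exists a, eval (allnz cs) v a /\ (a = 0 <-> In 0 ys).
Proof.
  induction 1 as [|c y cs ys h1 h2 [a [Ha Hi]]]; simpl.
  - exists 1; split. apply one_ok. split; [discriminate|tauto].
  - eexists; split. apply (cnd_ok _ _ _ _ _ _ _ h1 (eZero _) Ha).
    destruct y; simpl. tauto. rewrite <- Hi. split; [tauto|]. intros [h|h]; [discriminate|auto].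
Qed.

Lemma olist_some l ys : olist l = Some ys -> map (fun o => pred (enc o)) l = ys.
Proof.
  revert ys; induction l as [|o l IH]; simpl; intros ys h. congruence.
  destruct o as [y|]; [|discriminate]. destruct (olist l) as [ys'|]; [|discriminate].
  inversion h; subst. simpl. f_equal. auto.
Qed.
Lemma olist_none l : olist l = None -> In None l.
Proof.
  induction l as [|o l IH]; simpl; intros h. discriminate.
  destruct o as [y|]; auto. destruct (olist l); [discriminate|auto].
Qed.

Lemma olist_nin l ys : olist l = Some ys -> ~ In None l.
Proof.
  revert ys; induction l as [|o l IH]; simpl; intros ys h. auto.
  destruct o as [y|]; [|discriminate]. destruct (olist l) as [ys'|] eqn:E; [|discriminate].
  intros [h'|h']. discriminate. eapply IH; eauto.
Qed.

Lemma Forall2_map_r {A} (R : A -> nat -> Prop) (l : list A) (F : A -> nat) :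
  (forall a, In a l -> R a (F a)) -> Forall2 R l (map F l).
Proof. induction l; simpl; constructor; auto. Qed.

Lemma T_spec t : forall k s v, length v = k -> eval (T t k) (s :: v) (enc (ev s t v)).
Proof.
  induction t as [| |i|f gs IHf IHgs|f g IHf IHg|f IHf] using term_ind2; intros k s v Hk; simpl.
  - apply one_ok.
  - destruct v as [|x v]; simpl in Hk; subst k; simpl. constructor.
    apply suc_ok, suc_ok. apply eP; simpl; auto; lia.
  - subst k. destruct (Nat.ltb_spec i (length v)); simpl.
    + apply suc_ok. apply eP; simpl; auto; lia.
    + constructor.
  -
    set (l := map (fun g => ev s g v) gs).
    assert (HF : Forall2 (fun c y => eval c (s :: v) y) (map (fun g => T g k) gs) (map enc l)).
    { unfold l. rewrite map_map. clear IHf. induction IHgs; simpl; constructor; auto. }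
    destruct (allnz_ok _ _ _ HF) as [a [Ha Hi]].
    assert (HP : Forall2 (fun c y => eval c (s :: v) y) (map prd (map (fun g => T g k) gs)) (map pred (map enc l))).
    { clear Ha Hi. induction HF; simpl; constructor; auto. apply prd_ok; auto. }
    rewrite (map_map enc pred) in HP.
    assert (HA : eval (Comp (T f (length gs)) (Proj 0 :: map prd (map (fun g => T g k) gs))) (s :: v)
                    (enc (ev s f (map (fun o => pred (enc o)) l)))).
    { econstructor. constructor. apply eP; simpl; auto; lia. exact HP.
      apply IHf. unfold l. now rewrite !length_map. }
    pose proof (cnd_ok _ _ _ _ _ _ _ Ha (eZero _) HA) as H.
    destruct (olist l) eqn:E.
    + pose proof (olist_some _ _ E) as E'. rewrite E' in H. destruct a; auto.
      exfalso. assert (In 0 (map enc l)) as H0 by (apply Hi; reflexivity).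
      apply in_map_iff in H0. destruct H0 as [o [Ho Ho']].
      destruct o; [discriminate|]. eapply olist_nin; eauto.
    + replace a with 0 in H. exact H. symmetry; apply Hi.
      apply in_map_iff. exists None; split; auto. apply olist_none; auto.
  - destruct v as [|n w]; simpl in Hk; subst k; simpl. constructor.
    econstructor.
    + apply Forall2_app with (l1 := [Proj 1; Proj 0]) (l1' := [n; s]).
      constructor; [apply eP; simpl; auto; lia|]. constructor; [apply eP; simpl; auto; lia|]. constructor.
      apply (projs_ok [s; n] w).
    + induction n as [|n IH]; simpl.
      * constructor. apply IHf; auto.
      * econstructor. exact IH.
        assert (HG : forall r0, eval (Comp (T g (S (S (length w)))) ([Proj 2; Proj 0; prd (Proj 1)] ++ projs 3 (length w)))
                     (n :: r0 :: s :: w) (enc (ev s g (n :: pred r0 :: w)))).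
        { intros r0. econstructor.
          ++ apply Forall2_app with (l1 := [Proj 2; Proj 0; prd (Proj 1)]) (l1' := [s; n; pred r0]).
              constructor. apply eP; simpl; auto; lia. constructor. apply eP; simpl; auto; lia.
              constructor. apply (prd_ok _ _ r0). apply eP; simpl; auto; lia. constructor.
              apply (projs_ok [n; r0; s] w).
          ++ apply IHg. simpl; auto. }
        destruct (prit (ev s f w) (fun n r => ev s g (n :: r :: w)) n) as [r|]; simpl.
        -- refine (cnd_ok _ _ _ (n :: S r :: s :: w) (S r) 0 _ _ (eZero _) (HG (S r))).
           apply eP; simpl; auto; lia.
        -- refine (cnd_ok _ _ _ (n :: 0 :: s :: w) 0 0 _ _ (eZero _) (HG 0)).
           apply eP; simpl; auto; lia.
  - subst k. cbv zeta.
    set (c := Comp (T f (S (length v))) ([Proj 2; Proj 0] ++ projs 3 (length v))).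
    set (h := fun m => ev s f (m :: v)).
    assert (Hc : forall j a, eval c (j :: a :: s :: v) (enc (h j))).
    { intros j a. econstructor.
      - apply Forall2_app with (l1 := [Proj 2; Proj 0]) (l1' := [s; j]).
        constructor; [apply eP; simpl; auto; lia|]. constructor; [apply eP; simpl; auto; lia|]. constructor.
        apply (projs_ok [j; a; s] v).
      - apply IHf. simpl; auto. }
    assert (HP : forall j, eval (Prec Zero (cnd (Proj 1) (cnd c one (cnd (prd c) (suc (suc (Proj 0))) Zero)) (Proj 1)))
                   (j :: s :: v) (mst h j)).
    { induction j as [|j IH]; simpl. constructor. constructor.
      econstructor. exact IH.
      assert (Hin : eval (cnd c one (cnd (prd c) (suc (suc (Proj 0))) Zero)) (j :: mst h j :: s :: v)
                 (match h j with None => 1 | Some 0 => j + 2 | Some (S _) => 0 end)).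
      { pose proof (cnd_ok _ _ _ _ _ _ _ (Hc j (mst h j)) (one_ok _)
           (cnd_ok _ _ _ _ _ _ _ (prd_ok _ _ _ (Hc j (mst h j))) (suc_ok _ _ _ (suc_ok _ _ _ (eP 0 (j :: mst h j :: s :: v) j ltac:(simpl; lia) eq_refl))) (eZero _))) as H.
        destruct (h j) as [[|y]|]; simpl in H; auto. now rewrite Nat.add_comm. }
      pose proof (cnd_ok _ _ _ _ _ _ _ (eP 1 (j :: mst h j :: s :: v) (mst h j) ltac:(simpl; lia) eq_refl) Hin
                    (eP 1 (j :: mst h j :: s :: v) (mst h j) ltac:(simpl; lia) eq_refl)) as H.
      destruct (mst h j); exact H. }
    econstructor.
    + constructor; [|constructor]. econstructor; [|apply HP].
      apply Forall2_app with (l1 := [Proj 0; Proj 0]) (l1' := [s; s]).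
      constructor; [apply eP; simpl; auto; lia|]. constructor; [apply eP; simpl; auto; lia|]. constructor.
      apply (projs_ok [s] v).
    + pose proof (cnd_ok _ _ _ _ _ _ _ (prd_ok _ _ _ (eP 0 [mst h s] (mst h s) ltac:(simpl; lia) eq_refl)) (eZero _)
          (prd_ok _ _ _ (eP 0 [mst h s] (mst h s) ltac:(simpl; lia) eq_refl))) as H.
      destruct (mst h s) as [|[|m]]; exact H.
Qed.

Lemma mst_A h j : mst h j = 0 -> forall m, m < j -> exists k, h m = Some (S k).
Proof.
  induction j as [|j IH]; simpl; intros H m Hm. lia.
  destruct (mst h j) eqn:E; [|discriminate].
  destruct (h j) as [[|k]|] eqn:Ej; try discriminate; [rewrite Nat.add_comm in H; discriminate|].
  destruct (Nat.eq_dec m j). subst; eauto. apply IH; auto; lia.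
Qed.
Lemma mst_B h j : (forall m, m < j -> exists k, h m = Some (S k)) -> mst h j = 0.
Proof.
  induction j as [|j IH]; simpl; intros H. auto.
  rewrite IH by (intros; apply H; lia). destruct (H j ltac:(lia)) as [k ->]. auto.
Qed.
Lemma mst_C h j m : mst h j = S (S m) -> m < j /\ h m = Some 0 /\ (forall m', m' < m -> exists k, h m' = Some (S k)).
Proof.
  induction j as [|j IH]; simpl; intros H. discriminate.
  destruct (mst h j) eqn:E.
  - destruct (h j) as [[|k]|] eqn:Ej; try discriminate.
    rewrite Nat.add_comm in H. simpl in H. inversion H; subst. split; auto. split; auto.
    apply mst_A; auto.
  - destruct (IH H) as [h1 [h2 h3]]. repeat split; auto; lia.
Qed.
Lemma mst_D h j m : m < j -> h m = Some 0 -> (forall m', m' < m -> exists k, h m' = Some (S k)) -> mst h j = S (S m).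
Proof.
  induction j as [|j IH]; simpl; intros H1 H2 H3. lia.
  destruct (Nat.eq_dec m j).
  - subst. rewrite mst_B by auto. rewrite H2. now rewrite Nat.add_comm.
  - rewrite IH by (auto; lia). auto.
Qed.

Lemma ev_Mu s f v m : ev s (Mu f) v = Some m <-> mst (fun m => ev s f (m :: v)) s = S (S m).
Proof.
  simpl. unfold mres. destruct (mst _ s) as [|[|m']]; split; intro H; try discriminate; congruence.
Qed.

Lemma olist_sound s v gs ys (IH : Forall (fun g => forall v y, ev s g v = Some y -> eval g v y) gs) :
  olist (map (fun g => ev s g v) gs) = Some ys -> Forall2 (fun g y => eval g v y) gs ys.
Proof.
  revert ys; induction IH as [|g gs Hg HF IHF]; simpl; intros ys H.
  - inversion H; constructor.
  - destruct (ev s g v) eqn:E1; [|discriminate]. destruct (olist _) eqn:E2; [|discriminate].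
    inversion H; subst. constructor; auto.
Qed.

Lemma ev_sound t : forall s v y, ev s t v = Some y -> eval t v y.
Proof.
  induction t as [| |i|f gs IHf IHgs|f g IHf IHg|f IHf] using term_ind2; intros s v y H.
  - inversion H; constructor.
  - destruct v; simpl in H; inversion H; constructor.
  - simpl in H. destruct (Nat.ltb_spec i (length v)); inversion H. now constructor.
  - simpl in H. destruct (olist _) eqn:E; [|discriminate]. econstructor; [|eauto].
    eapply olist_sound; eauto. eapply Forall_impl; [|exact IHgs]. simpl; eauto.
  - destruct v as [|n w]; simpl in H. discriminate. revert y H.
    induction n as [|n IH]; simpl; intros y H. constructor; eauto.
    destruct (prit _ _ n) eqn:E; [|discriminate]. econstructor; eauto.
  - apply ev_Mu in H. apply mst_C in H. destruct H as [h1 [h2 h3]].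
    constructor; eauto. intros m hm. destruct (h3 m hm) as [k hk]. eauto.
Qed.

Lemma ev_mono t : forall s s' v y, s <= s' -> ev s t v = Some y -> ev s' t v = Some y.
Proof.
  induction t as [| |i|f gs IHf IHgs|f g IHf IHg|f IHf] using term_ind2; intros s s' v y Hs H; auto.
  - simpl in *. destruct (olist (map (fun g => ev s g v) gs)) eqn:E; [|discriminate].
    assert (E' : olist (map (fun g => ev s' g v) gs) = Some l).
    { clear H. revert l E. induction IHgs as [|g gs Hg HF IHF]; simpl; intros l E; auto.
      destruct (ev s g v) eqn:E1; [|discriminate]. destruct (olist (map _ gs)) eqn:E2; [|discriminate].
      rewrite (Hg _ _ _ _ Hs E1). rewrite (IHF _ eq_refl). auto. }
    rewrite E'. eauto.
  - destruct v as [|n w]; simpl in *. discriminate. revert y H.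
    induction n as [|n IH]; simpl; intros y H. eauto.
    destruct (prit (ev s f w) _ n) eqn:E; [|discriminate]. rewrite (IH _ eq_refl). eauto.
  - apply ev_Mu in H. apply mst_C in H. destruct H as [h1 [h2 h3]]. apply ev_Mu.
    apply mst_D. lia. eauto. intros m' hm'. destruct (h3 m' hm') as [k hk]. eauto.
Qed.

Lemma ev_complete t v y : eval t v y -> exists s0, forall s, s0 <= s -> ev s t v = Some y.
Proof.
  revert t v y. apply eval_ind2.
  - exists 0; auto.
  - exists 0; auto.
  - intros i v h. exists 0; intros; simpl. destruct (Nat.ltb_spec i (length v)); auto; lia.
  - intros f gs v ys z HF Hf [s1 Hs1].
    assert (exists s0, forall s, s0 <= s -> olist (map (fun g => ev s g v) gs) = Some ys) as [s2 Hs2].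
    { clear Hf Hs1. induction HF as [|g y gs ys [_ [s0 H0]] _ [s3 H3]]. exists 0; auto.
      exists (max s0 s3); intros s hs; simpl. rewrite H0, H3 by lia. auto. }
    exists (max s1 s2); intros s hs; simpl. rewrite Hs2 by lia. apply Hs1; lia.
  - intros f g v y _ [s1 H1]. exists s1; intros; simpl; auto.
  - intros f g n v r y _ [s1 H1] _ [s2 H2]. exists (max s1 s2); intros s hs.
    specialize (H1 s ltac:(lia)). simpl in H1 |- *. rewrite H1. apply H2; lia.
  - intros f v n _ [s1 H1] Hm.
    assert (exists s0, forall s, s0 <= s -> forall m, m < n -> exists k, ev s f (m :: v) = Some (S k)) as [s2 H2].
    { clear H1. induction n as [|n IH]. exists 0; intros; lia.
      destruct IH as [s2 H2]. intros m hm; apply Hm; lia.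
      destruct (Hm n ltac:(lia)) as [k [_ [s3 H3]]].
      exists (max s2 s3); intros s hs m hm. destruct (Nat.eq_dec m n). subst; exists k; apply H3; lia.
      apply H2; lia. }
    exists (max (S n) (max s1 s2)); intros s hs. apply ev_Mu. apply mst_D. lia. apply H1; lia.
    intros; apply H2; auto; lia.
Qed.

Lemma ev_det_eval t v y1 y2 : eval t v y1 -> eval t v y2 -> y1 = y2.
Proof.
  intros h1 h2. destruct (ev_complete _ _ _ h1) as [s1 H1]. destruct (ev_complete _ _ _ h2) as [s2 H2].
  specialize (H1 (max s1 s2) ltac:(lia)). specialize (H2 (max s1 s2) ltac:(lia)). congruence.
Qed.

Definition isS (o : option nat) : bool := match o with Some _ => true | None => false end.
Definition L t s n := filter (fun x => isS (ev s t [n; x])) (seq 0 s).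
Definition cntf t n s := length (L t s n).
Definition Ct t := Comp (Prec Zero (Comp addT [Proj 1; cnd (Comp (T t 2) [Proj 3; Proj 2; Proj 0]) Zero one]))
                        [Proj 1; Proj 0; Proj 1].

Lemma Ct_ok t n s : eval (Ct t) [n; s] (cntf t n s).
Proof.
  econstructor.
  - constructor; [apply eP; simpl; auto; lia|]. constructor; [apply eP; simpl; auto; lia|].
    constructor; [apply eP; simpl; auto; lia|]. constructor.
  - unfold cntf, L.
    enough (forall k, eval (Prec Zero (Comp addT [Proj 1; cnd (Comp (T t 2) [Proj 3; Proj 2; Proj 0]) Zero one]))
       [k; n; s] (length (filter (fun x => isS (ev s t [n; x])) (seq 0 k)))) by auto.
    induction k as [|k IH].
    + constructor. constructor.
    + econstructor. exact IH.
      rewrite seq_S, filter_app, length_app. simpl.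
      apply add_ok. apply eP; simpl; auto; lia.
      assert (HT : eval (Comp (T t 2) [Proj 3; Proj 2; Proj 0]) (k :: length (filter (fun x => isS (ev s t [n; x])) (seq 0 k)) :: n :: s :: nil) (enc (ev s t [n; k]))).
      { econstructor. constructor; [apply eP; simpl; auto; lia|]. constructor; [apply eP; simpl; auto; lia|].
        constructor; [apply eP; simpl; auto; lia|]. constructor. apply T_spec; auto. }
      pose proof (cnd_ok _ _ _ _ _ _ _ HT (eZero _) (one_ok _)) as H.
      destruct (ev s t [n; k]); exact H.
Qed.

Lemma L_nodup t s n : NoDup (L t s n).
Proof. apply NoDup_filter, seq_NoDup. Qed.
Lemma L_in t s n x : In x (L t s n) <-> x < s /\ exists y, ev s t [n; x] = Some y.
Proof.
  unfold L. rewrite filter_In, in_seq. destruct (ev s t [n;x]); simpl; split; intros [h1 h2]; try split; eauto; try lia.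
  destruct h2 as [? ?]; discriminate.
Qed.
Lemma L_mono t s s' n : s <= s' -> incl (L t s n) (L t s' n).
Proof.
  intros hs x hx. apply L_in in hx. apply L_in. destruct hx as [h1 [y h2]]. split. lia.
  exists y. eapply ev_mono; eauto.
Qed.
Lemma cnt_mono t s s' n : s <= s' -> cntf t n s <= cntf t n s'.
Proof. intros. apply NoDup_incl_length. apply L_nodup. now apply L_mono. Qed.
Lemma L_W t n x : (exists y, eval t [n; x] y) <-> exists s, In x (L t s n).
Proof.
  split.
  - intros [y h]. destruct (ev_complete _ _ _ h) as [s0 H]. exists (max s0 (S x)). apply L_in.
    split. lia. exists y. apply H; lia.
  - intros [s h]. apply L_in in h. destruct h as [_ [y h]]. exists y. eapply ev_sound; eauto.
Qed.

Lemma part1 phi : pcomp2 phi -> MaxRec (cardRE phi).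
Proof.
  intros [tp Hp].
  assert (HW : forall n x, W phi n x <-> exists s, In x (L tp s n)).
  { intros n x. unfold W. rewrite <- L_W. split; intros [y h]; exists y; apply Hp; auto. }
  exists (cntf tp). split; [|split].
  - exists (Ct tp). intros; apply Ct_ok.
  - intros x t t' y y' ht h1 h2. unfold graph2 in *. subst. now apply cnt_mono.
  - intros n c. unfold pmax, values, graph2. split.
    + intros [l [Hnd [Hin Hlen]]].
      assert (exists S0, forall x, In x l -> In x (L tp S0 n)) as [S0 HS0].
      { assert (Hl : forall x, In x l -> W phi n x) by (intros; apply Hin; auto).
        clear Hnd Hlen Hin. induction l as [|a l IH]. exists 0; intros x [].
        destruct IH as [S1 H1]. intros x hx; apply Hl; simpl; auto.
        destruct (proj1 (HW n a) (Hl a (or_introl eq_refl))) as [S2 H2].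
        exists (max S1 S2). intros x [<-|hx]. eapply L_mono; [|exact H2]; lia.
        eapply L_mono; [|apply H1; exact hx]; lia. }
      assert (Hle : forall s, cntf tp n s <= c).
      { intros s. subst c. apply NoDup_incl_length. apply L_nodup. intros x hx. apply Hin, HW. eauto. }
      assert (Hge : forall s, S0 <= s -> cntf tp n s = c).
      { intros s hs. apply Nat.le_antisymm. auto. subst c. apply NoDup_incl_length; auto.
        intros x hx. eapply L_mono; [exact hs|]. auto. }
      split; [|split].
      * exists (map (cntf tp n) (seq 0 (S S0))). intros z. rewrite in_map_iff. split.
        -- intros [t <-]. destruct (Nat.le_gt_cases t S0).
           exists t. rewrite in_seq. split; auto; lia.
           exists S0. rewrite in_seq. split; [|lia]. rewrite !Hge; auto; lia.
        -- intros [t [<- _]]. eauto.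
      * exists S0. apply Hge; auto.
      * intros z [t <-]. auto.
    + intros [_ [[s0 Hs0] Hmax]].
      exists (L tp s0 n). split; [apply L_nodup|split; auto].
      intros x. rewrite HW. split; [eauto|]. intros [s1 H1].
      destruct (in_dec Nat.eq_dec x (L tp s0 n)) as [i|ni]; auto. exfalso.
      set (s := max s0 s1).
      assert (Hl : S (length (L tp s0 n)) <= length (L tp s n)).
      { change (length (x :: L tp s0 n) <= length (L tp s n)). apply NoDup_incl_length.
        constructor; auto. apply L_nodup. intros z [<-|hz]. eapply L_mono; [|exact H1]; lia.
        eapply L_mono; [|exact hz]; lia. }
      specialize (Hmax (cntf tp n s) (ex_intro _ s eq_refl)). unfold cntf in *. lia.
Qed.

Lemma inv_Proj i v y : eval (Proj i) v y -> y = nth i v 0.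
Proof. intros H; inversion H; auto. Qed.
Lemma inv_Comp2 f g1 g2 v z : eval (Comp f [g1; g2]) v z -> exists a b, eval g1 v a /\ eval g2 v b /\ eval f [a; b] z.
Proof.
  intros H; inversion H; subst. inversion H2; subst. inversion H6; subst. inversion H8; subst. eauto 6.
Qed.

Lemma rec_thm phi : acceptable phi -> forall h, tcomp1 h -> exists e, forall x y, phi e x y <-> phi (h e) x y.
Proof.
  intros [[tp Hp] [H2 H3]] h [th Hh].
  set (chiT := Comp tp [Comp tp [Proj 0; Proj 0]; Proj 1]).
  destruct (H3 (fun u x y => eval chiT [u;x] y) (ex_intro _ chiT (fun _ _ _ => iff_refl _))) as [r [[tr Htr] Hr]].
  set (GT := Comp th [Comp tr [Proj 0]]).
  assert (HG : forall u, eval GT [u] (h (r u))).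
  { intros u. econstructor. constructor; [|constructor]. econstructor. constructor; [|constructor].
    apply eP; simpl; auto. apply Htr. apply Hh. }
  destruct (H2 (fun u y => eval GT [u] y) (ex_intro _ GT (fun _ _ => iff_refl _))) as [v Hv].
  exists (r v). intros x y. rewrite <- Hr. split.
  - intro H. apply inv_Comp2 in H. destruct H as [a [b [Ha [Hb Hy]]]].
    apply inv_Proj in Hb. simpl in Hb. subst b.
    apply inv_Comp2 in Ha. destruct Ha as [a1 [a2 [Ha1 [Ha2 Ha]]]].
    apply inv_Proj in Ha1. apply inv_Proj in Ha2. simpl in *. subst.
    apply Hp in Ha. apply Hv in Ha. rewrite (ev_det_eval _ _ _ _ Ha (HG v)) in Hy. now apply Hp.
  - intro H. econstructor.
    + constructor; [|constructor; [|constructor]].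
      * econstructor. constructor; [|constructor; [|constructor]]; apply eP; simpl; auto.
        apply Hp, Hv, HG.
      * apply eP; simpl; auto.
    + now apply Hp.
Qed.

Lemma finite_bounded (P : nat -> Prop) B : (forall z, P z -> z < B) -> exists l, forall z, P z <-> In z l.
Proof.
  revert P; induction B as [|B IH]; intros P HB.
  - exists nil. intros z; split; [intros h; specialize (HB z h); lia|intros []].
  - destruct (IH (fun z => P z /\ z < B)) as [l Hl]. intros z [_ h]; auto.
    destruct (classic (P B)) as [hB|hB].
    + exists (B :: l). intros z. simpl. rewrite <- Hl. split.
      * intros h. destruct (Nat.eq_dec B z); auto. right; split; auto. specialize (HB z h); lia.
      * intros [<-|[h _]]; auto.
    + exists l. intros z. rewrite <- Hl. split; [|tauto]. intros h; split; auto.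
      specialize (HB z h). destruct (Nat.eq_dec z B); [subst; contradiction|lia].
Qed.

Lemma least_cl (P : nat -> Prop) n : P n -> exists k, P k /\ forall m, P m -> k <= m.
Proof.
  induction n as [n IH] using (well_founded_induction lt_wf). intros hn.
  destruct (classic (exists m, m < n /\ P m)) as [[m [hm pm]]|hno].
  - exact (IH m hm pm).
  - exists n; split; auto. intros m pm. destruct (Nat.le_gt_cases n m); auto. exfalso; eauto.
Qed.

Lemma pmin_dom f n : mono_decr f -> (exists c, pmin f n c) <-> exists t y, f n t y.
Proof.
  intros Hd. split.
  - intros [c [_ [[t h] _]]]. eauto.
  - intros [t0 [y0 H0]].
    assert (exists B, forall t z, t < t0 -> f n t z -> z <= B) as [B HB].
    { clear H0. induction t0 as [|t0 [B IH]]. exists 0; intros; lia.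
      destruct (classic (exists z, f n t0 z)) as [[z hz]|hz].
      - exists (max B z). intros t z' ht h. destruct (Nat.eq_dec t t0).
        + subst. assert (z' <= z) by (eapply Hd; [apply le_n|exact hz|exact h]). lia.
        + specialize (IH t z' ltac:(lia) h). lia.
      - exists B. intros t z' ht h. destruct (Nat.eq_dec t t0). subst; exfalso; eauto. apply (IH t); auto; lia. }
    destruct (finite_bounded (values f n) (S (max B y0))) as [l Hl].
    { intros z [t h]. destruct (Nat.lt_ge_cases t t0).
      - specialize (HB t z H h). lia.
      - assert (z <= y0) by (eapply Hd; eauto). lia. }
    destruct (least_cl (values f n) y0 (ex_intro _ t0 H0)) as [k [hk hmin]].
    exists k. split; [exists l; exact Hl|split; auto].
Qed.

Definition gT tf := cnd (Comp (Ct tf) [Proj 1; Proj 0]) one Zero.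
Lemma gT_ok tf m e x : eval (gT tf) [m; e; x] (match cntf tf e m with 0 => 1 | S _ => 0 end).
Proof.
  apply cnd_ok. econstructor. constructor; [|constructor; [|constructor]]; apply eP; simpl; auto.
  apply Ct_ok. apply one_ok. constructor.
Qed.

Lemma psi_dom tf e x : (exists y, eval (Mu (gT tf)) [e; x] y) <-> exists t y, eval tf [e; t] y.
Proof.
  split.
  - intros [y H]. inversion H; subst.
    pose proof (ev_det_eval _ _ _ _ H1 (gT_ok tf y e x)) as E.
    destruct (cntf tf e y) eqn:C; [discriminate|].
    unfold cntf in C. destruct (L tf y e) as [|t l] eqn:EL; [discriminate|].
    assert (In t (L tf y e)) by (rewrite EL; simpl; auto).
    exists t. apply L_W. eauto.
  - intros [t [y H]]. destruct (proj1 (L_W _ _ _) (ex_intro _ y H)) as [s Hs].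
    assert (Hc : 0 < cntf tf e s).
    { unfold cntf. destruct (L tf s e); [destruct Hs|simpl; lia]. }
    destruct (least_cl (fun m => 0 < cntf tf e m) s Hc) as [m [hm hmin]].
    exists m. constructor.
    + pose proof (gT_ok tf m e x) as G. destruct (cntf tf e m); [lia|exact G].
    + intros m' hm'. exists 0. pose proof (gT_ok tf m' e x) as G.
      destruct (cntf tf e m') eqn:C; [exact G|]. specialize (hmin m' ltac:(lia)). lia.
Qed.

Lemma part2 phi : acceptable phi -> ~ MinPR (cardRE phi).
Proof.
  intros Hacc [f [[tf Hf] [Hdec Hmin]]].
  destruct Hacc as [Hp [H2 H3]].
  destruct (H3 (fun e x y => eval (Mu (gT tf)) [e; x] y) (ex_intro _ (Mu (gT tf)) (fun _ _ _ => iff_refl _))) as [s [Hs Hsp]].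
  destruct (rec_thm phi (conj Hp (conj H2 H3)) s Hs) as [e He].
  assert (HW : forall x, W phi e x <-> exists t y, f e t y).
  { intros x. unfold W. setoid_rewrite He. setoid_rewrite <- Hsp. rewrite psi_dom.
    split; intros [t [y h]]; exists t, y; apply Hf; auto. }
  destruct (classic (exists t y, f e t y)) as [D|ND].
  - destruct (proj2 (pmin_dom f e Hdec) D) as [c Hc]. apply Hmin in Hc.
    destruct Hc as [l [Hnd [Hin Hlen]]].
    assert (S c <= length l).
    { rewrite <- (length_seq (S c) 0). apply NoDup_incl_length. apply seq_NoDup.
      intros x _. apply Hin, HW, D. }
    lia.
  - apply ND. apply (pmin_dom f e Hdec). exists 0. apply Hmin.
    exists nil. split; [constructor|split; auto]. intros x. split; [intros []|]. intros h. apply HW in h. contradiction.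
Qed.

Theorem mainTheorem19 :
  forall phi : nat -> nat -> nat -> Prop,
    acceptable phi ->
    MaxRec (cardRE phi) /\ ~ MinPR (cardRE phi).
Proof.
  intros phi H. split. apply part1, H. apply part2, H.
Qed.
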